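(* Let $G$ be a finite group and $p$ the smallest prime divisor of $|G|$. Then every non-nilpotent subgroup of $G$ is a TI-subgroup of $G$ or subnormal in $G$ or has $p'$-order if and only if every non-nilpotent subgroup of $G$ of order divisible by $p$ is subnormal in $G$.
   Context: All groups are finite. A subgroup $H$ of a group $G$ is a TI-subgroup of $G$ if for every $g\in G$, $H^g\cap H=1$ or $H^g\cap H=H$. A subgroup has $p'$-order if its order is not divisible by $p$. *)

(* Defs.v *)
From mathcomp Require Import all_boot all_fingroup all_solvable.
Set Implicit Arguments. Unset Strict Implicit. Unset Printing Implicit Defensive.
Local Open Scope group_scope.

Definition TI_subgroup (gT : finGroupType) (H G : {set gT}) : Prop :=
  forall g, g \in G -> (H :^ g :&: H = 1) \/ (H :^ g :&: H = H).

(* Main.v *)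
Require Import Defs.
From mathcomp Require Import all_boot all_fingroup all_solvable.
From mathcomp Require Import ssralg all_character.
Set Implicit Arguments. Unset Strict Implicit. Unset Printing Implicit Defensive.
Import GRing.Theory FiniteModule.
Local Open Scope group_scope.

Lemma sylow_sn_normal (gT : finGroupType) (r : nat) (M S : {group gT}) :
  r.-Sylow(M) S -> S <|<| M -> S <| M.
Proof.
move: {2}#|M| (leqnn #|M|) => n; elim: n M => [|n IH] M leM sylS snS.
  by move: (cardG_gt0 M); rewrite leqn0 in leM; rewrite (eqP leM).
have [->|[K [snSK nKM prKM]]] := subnormalEr snS; first exact: normal_refl.
have sKM := proper_sub prKM.
have sSK := subnormal_sub snSK.
have sylSK : r.-Sylow(K) S := pHall_subl sSK sKM sylS.
have nSK : S <| K.
  apply: IH sylSK snSK; rewrite -ltnS; apply: leq_trans leM.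
  exact: proper_card.
rewrite -(normal_Hall_pcore sylSK nSK).
exact: char_normal_trans (pcore_char _ _) nKM.
Qed.

Section Norm.
Variables (gT : finGroupType) (V : {group gT}) (abV : abelian V).

Lemma norm_sum0 (a : gT) (p : nat) (u : fmod_of abV) :
  a \in 'N(V) -> a ^+ p = 1 -> 'C_V[a] = 1 ->
  (\sum_(i < p) u ^@ (a ^+ i) = 0)%R.
Proof.
move=> nVa ap cVa.
set S := (\sum_(i < p) _)%R.
have SJ : (S ^@ a = S)%R.
  rewrite /S actr_sum.
  have -> : (\sum_(i < p) u ^@ (a ^+ i) ^@ a = \sum_(i < p) u ^@ (a ^+ i.+1))%R.
    apply: eq_bigr => i _; rewrite -actrM ?groupX //.
    by rewrite -expgSr.
  case: p ap {S} => [|p] ap; first by rewrite !big_ord0.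
  rewrite big_ord_recr /= ap [in RHS]big_ord_recl /= expg0 addrC.
  apply: congr1; apply: eq_bigr => i _; by rewrite /bump add1n.
apply: fmod_inj; rewrite fmval0.
have : val S \in 'C_V[a].
  rewrite inE fmodP /=; apply/cent1P.
  by apply/commgP/conjg_fixP; rewrite -fmvalJ // SJ.
by rewrite cVa => /set1P ->.
Qed.
End Norm.

Lemma mulmod_inj (p k : nat) (p_gt0 : 0 < p) :
  coprime k p ->
  injective (fun j : 'I_p => Ordinal (ltn_pmod (j * k) p_gt0)).
Proof.
move=> cokp j1 j2 [] /eqP Hm; apply/val_inj => /=.
wlog le12 : j1 j2 Hm / j1 <= j2.
  move=> W; case/orP: (leq_total j1 j2) => le; first exact: W.
  by apply/esym/W; rewrite // eq_sym.
move: Hm; rewrite eq_sym eqn_mod_dvd ?leq_mul2r ?le12 ?orbT // -mulnBl.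
rewrite Gauss_dvdl; last by rewrite coprime_sym.
move=> dv; apply/eqP; rewrite eqn_leq le12 /= leqNgt; apply/negP => lt12.
have := dvdn_leq _ dv; rewrite subn_gt0 lt12 => /(_ isT).
rewrite leqNgt; apply/negP/negPn.
by apply: leq_ltn_trans (leq_subr _ _) (ltn_ord j2).
Qed.

Lemma expMc (gT : finGroupType) (a b : gT) n : commute a b -> (a * b) ^+ n = a ^+ n * b ^+ n.
Proof. exact: expgMn. Qed.

Lemma fpf_p2 (gT : finGroupType) (K A : {group gT}) (p : nat) (x y : gT) :
  prime p -> semiregular K A -> A \subset 'N(K) -> coprime #|K| #|A| ->
  x \in A -> y \in A -> commute x y -> #[x] = p -> #[y] = p -> y \notin <[x]> ->
  K :=: 1.
Proof.
move=> p_pr srKA nKA coKA Ax Ay cxy ox oy yNx.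
have p_gt0 := prime_gt0 p_pr.
apply/eqP; apply/negPn/negP => ntK.
have ltK : 1 < #|K| by rewrite cardG_gt1.
pose q := pdiv #|K|.
pose B := (<[x]> <*> <[y]>)%G.
have sBA : B \subset A by rewrite join_subG !cycle_subG Ax Ay.
have abB : abelian B.
  rewrite abelianY !cycle_abelian /= cycle_subG.
  have : y \in 'C[x] by apply/cent1P; apply: commute_sym.
  by rewrite -cent_cycle.
have xB : x \in B by rewrite (subsetP (joing_subl _ _)) ?cycle_id.
have yB : y \in B by rewrite (subsetP (joing_subr _ _)) ?cycle_id.
have [Q sylQ nQB] := sol_coprime_Sylow_exists q (abelian_sol abB)
   (subset_trans sBA nKA) (coprimegS sBA coKA).
have ntQ : Q :!=: 1.
  by rewrite -cardG_gt1 (card_Hall sylQ) p_part_gt1 pi_pdiv.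
pose V := 'Z(Q).
have ntV : V :!=: 1 by rewrite /V center_nil_eq1 // (pgroup_nil (pHall_pgroup sylQ)).
have abV : abelian V := center_abelian Q.
have nVB : B \subset 'N(V) := char_norm_trans (center_char Q) nQB.
have sVK : V \subset K := subset_trans (center_sub Q) (pHall_sub sylQ).
have cV a : a \in A -> a != 1 -> 'C_V[a] = 1.
  move=> Aa nta; apply/trivgP; rewrite -(srKA a); first exact: setSI.
  by rewrite !inE nta.
have coVp : coprime #|V| p.
  rewrite -ox; apply: coprimeSg sVK _.
  exact: coprime_dvdr (order_dvdG Ax) coKA.
have xp : x ^+ p = 1 by rewrite -ox expg_order.
have yp : y ^+ p = 1 by rewrite -oy expg_order.
have ntx : x != 1 by rewrite -order_eq1 ox; case: p p_pr {p_gt0 ox oy xp yp coVp} => [|[|]].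
have key : forall u : fmod_of abV, (u *+ p = 0)%R.
  move=> u.
  have E j : (\sum_(k < p) u ^@ ((y * x ^+ j) ^+ k) = 0)%R.
    apply: norm_sum0.
    - by rewrite (subsetP nVB) // groupM ?groupX.
    - rewrite expMc; last exact: commuteX.
      by rewrite yp -expgM mulnC expgM xp expg1n mulg1.
    - apply: cV; first by rewrite groupM ?groupX.
      apply: contra yNx => /eqP yx1.
      by rewrite -(mulgK (x ^+ j) y) yx1 mul1g groupV groupX ?cycle_id.
  have : (\sum_(j < p) \sum_(k < p) u ^@ ((y * x ^+ j) ^+ k) = 0)%R.
    by rewrite big1 // => j _; apply: E.
  case: p {E} p_pr p_gt0 ox oy xp yp coVp => [//|p'] p_pr p_gt0 ox oy xp yp coVp.
  under eq_bigr => j _ do rewrite big_ord_recl.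
  rewrite big_split /= exchange_big /=.
  under eq_bigr => j _ do rewrite expg0 actr1.
  rewrite sumr_const card_ord big1 ?addr0 // => k _.
  pose w := (u ^@ (y ^+ (bump 0 k)))%R.
  have cok : coprime (bump 0 k) p'.+1.
    rewrite coprime_sym prime_coprime //; apply/negP => /(dvdn_leq (ltn0Sn k)).
    by rewrite ltnNge ltn_ord.
  transitivity (\sum_(j < p'.+1) w ^@ (x ^+ (Ordinal (ltn_pmod (j * bump 0 k) p_gt0)))
                : fmod_of abV)%R.
    apply: eq_bigr => j _ /=.
    have xm n : x ^+ (n %% p'.+1) = x ^+ n by rewrite -ox expg_mod_order.
    rewrite xm expMc; last exact: commuteX.
    have xM a b : (x ^+ a) ^+ b = x ^+ (a * b) by rewrite expgM.
    rewrite xM /w actrM // groupX // (subsetP nVB) //.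
  have -> : (\sum_(j < p'.+1) w ^@ x ^+ (Ordinal (ltn_pmod (j * bump 0 k) p_gt0))
     = \sum_(i < p'.+1) w ^@ x ^+ i :> fmod_of abV)%R.
    by rewrite [RHS](reindex_inj (@mulmod_inj _ _ p_gt0 cok)).
  apply: norm_sum0 => //; first by rewrite (subsetP nVB).
  exact: cV Ax ntx.
have [v Vv ntv] := trivgPn _ ntV.
have : v ^+ p = 1.
  have := congr1 val (key (fmod abV v)).
  by rewrite fmvalZ fmodK.
move/eqP; rewrite -order_dvdn => dvp.
have : #[v] %| #|V| := order_dvdG Vv.
move=> dvV; move: coVp; rewrite /coprime => /eqP g1.
have : #[v] %| gcdn #|V| p by rewrite dvdn_gcd dvV dvp.
rewrite g1 dvdn1 order_eq1.
by rewrite (negPf ntv).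
Qed.

Lemma nil_from_sn (gT : finGroupType) (M : {group gT}) (p : nat) :
  prime p -> p %| #|M| -> (forall r, prime r -> r %| #|M| -> p <= r) ->
  (forall X : {group gT}, X \subset M -> p %| #|X| -> X <|<| M) ->
  (forall x y, x \in M -> y \in M -> commute x y -> #[x] = p -> #[y] = p ->
     y \in <[x]>) ->
  nilpotent M.
Proof.
move=> p_pr pM minp snX cyc.
have [P sylP] := Sylow_exists p M.
have pP : p.-group P := pHall_pgroup sylP.
have ntP : P :!=: 1.
  rewrite -cardG_gt1 (card_Hall sylP) p_part_gt1 mem_primes p_pr cardG_gt0.
  exact: pM.
have [_ pdP _] := pgroup_pdiv pP ntP.
have nPM : P <| M := sylow_sn_normal sylP (snX P (pHall_sub sylP) pdP).
have ntZ : 'Z(P) :!=: 1 by rewrite center_nil_eq1 // (pgroup_nil pP).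
have [_ pdZ _] := pgroup_pdiv (pgroupS (center_sub P) pP) ntZ.
have [z Zz oz] := Cauchy p_pr pdZ.
have nZPM : 'Z(P) <| M := char_normal_trans (center_char P) nPM.
have sZM : 'Z(P) \subset M := subset_trans (center_sub P) (pHall_sub sylP).
have Mz : z \in M := subsetP sZM z Zz.
have nzM : M \subset 'N(<[z]>).
  apply/subsetP => m Mm.
  have Zzm : z ^ m \in 'Z(P) by rewrite memJ_norm // (subsetP (normal_norm nZPM)).
  have czm : commute z (z ^ m).
    by apply: (centsP (center_abelian P)).
  have zmz := cyc z (z ^ m) Mz (subsetP sZM _ Zzm) czm oz (etrans (orderJ z m) oz).
  by rewrite inE -cycleJ cycle_subG.
have czM : M \subset 'C(<[z]>).
  pose f := conj_aut <[z]>%G.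
  have df : #|f @* M| = #|M : 'C_M(<[z]>)|.
    by rewrite card_morphim ker_conj_aut /= (setIidPr nzM) indexgI.
  have dAut : #|f @* M| %| p.-1.
    have := cardSg (Aut_conj_aut <[z]>%G M).
    by rewrite card_Aut_cyclic ?cycle_cyclic // -/#[z] oz totient_prime.
  have dM : #|M : 'C_M(<[z]>)| %| #|M| := dvdn_indexg _ _.
  suff : #|M : 'C_M(<[z]>)| == 1%N by rewrite indexg_eq1 subsetI subxx.
  rewrite -df; apply/negPn/negP => nt.
  have lt1 : 1%N < #|f @* M| by rewrite ltn_neqAle eq_sym nt cardG_gt0.
  have r_pr := pdiv_prime lt1.
  have rM : pdiv #|f @* M| %| #|M| by rewrite (dvdn_trans (pdiv_dvd _)) // df.
  have := minp _ r_pr rM.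
  have := dvdn_leq _ (dvdn_trans (pdiv_dvd _) dAut).
  case: p p_pr {minp pM oz dAut snX cyc sylP pP pdP pdZ} => [//|[//|p']] _ /= H.
  by rewrite leqNgt ltnS H.
have snY (Y : {group gT}) : Y \subset M -> Y <|<| M.
  move=> sYM.
  pose J := (Y <*> <[z]>)%G.
  have sJM : J \subset M by rewrite join_subG sYM cycle_subG Mz.
  have pJ : p %| #|J|.
    by rewrite -oz (dvdn_trans (order_dvdG (cycle_id z))) ?cardSg ?joing_subr.
  apply: subnormal_trans (snX J sJM pJ).
  apply: normal_subnormal; rewrite /normal joing_subl join_subG normG /=.
  apply: cents_norm; rewrite centsC; exact: subset_trans sYM czM.
have sMF : M \subset 'F(M).
  rewrite -{1}(Sylow_gen M) gen_subG; apply/bigcupsP => S /SylowP [r r_pr sylS].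
  apply: Fitting_max; first exact: sylow_sn_normal sylS (snY S (pHall_sub sylS)).
  exact: pgroup_nil (pHall_pgroup sylS).
exact: nilpotentS sMF (Fitting_nil M).
Qed.

Definition Hyp (gT : finGroupType) (G : {group gT}) (p : nat) :=
  forall H : {group gT}, H \subset G -> ~~ nilpotent H ->
     [\/ TI_subgroup H G, H <|<| G | ~~ (p %| #|H|)%N].

Lemma Hyp_sub (gT : finGroupType) (G L : {group gT}) p :
  Hyp G p -> L \subset G -> Hyp L p.
Proof.
move=> hyp sLG H sHL nnH.
case: (hyp H (subset_trans sHL sLG) nnH) => [TI|sn|np].
- by apply: Or31 => g Lg; apply: TI; exact: subsetP sLG g Lg.
- apply: Or32; have := setI_subnormal sLG sn.
  by rewrite (setIidPl sHL).
- exact: Or33.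
Qed.

Lemma TI_normal (gT : finGroupType) (G L K : {group gT}) :
  TI_subgroup L G -> K <| G -> K \subset L -> K :!=: 1 -> L \subset G -> L <| G.
Proof.
move=> TI nsKG sKL ntK sLG; rewrite /normal sLG; apply/subsetP => g Gg.
have sKLg : K \subset L :^ g.
  by rewrite -(normP (subsetP (normal_norm nsKG) g Gg)) conjSg.
case: (TI g Gg) => [E|E].
  by move: ntK; rewrite -subG1 -E subsetI sKLg sKL.
have sLLg : L \subset L :^ g by have := subsetIl (L :^ g) L; rewrite E.
rewrite inE; suff -> : L :^ g = L by [].
by apply/eqP; rewrite eq_sym eqEcard sLLg cardJg leqnn.
Qed.

Lemma TI_frob (gT : finGroupType) (G M : {group gT}) :
  M \subset G -> M != G :> {set gT} -> M :!=: 1 -> 'N_G(M) = M ->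
  TI_subgroup M G -> [Frobenius G with complement M].
Proof.
move=> sMG neMG ntM NM TI; apply/andP; split => //.
apply/normedTI_P; split.
- by rewrite setD_eq0 subG1.
- by rewrite normD1 subsetI sMG normG.
move=> g Gg /pred0Pn [a /andP [aM aMg]].
rewrite conjD1g in aMg.
move: aM aMg; rewrite !inE => /andP [nta aM] /andP [_ aMg].
case: (TI g Gg) => E.
  have : a \in M :^ g :&: M by rewrite inE aMg aM.
  by rewrite E inE (negPf nta).
have sMMg : M \subset M :^ g by have := subsetIl (M :^ g) M; rewrite E.
have eM : M :^ g = M by apply/eqP; rewrite eq_sym eqEcard sMMg cardJg leqnn.
have : g \in 'N_G(M) by rewrite inE Gg; apply/normP.
by rewrite NM.
Qed.

Lemma main_fwd (gT : finGroupType) (n : nat) :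
  forall (G : {group gT}) (p : nat), #|G| <= n -> prime p ->
  (forall r, prime r -> r %| #|G| -> p <= r) -> Hyp G p ->
  forall H : {group gT}, H \subset G -> ~~ nilpotent H -> p %| #|H| ->
  H <|<| G.
Proof.
elim: n => [|n IH] G p leG p_pr minp hyp H sHG nnH pdH.
  by move: (cardG_gt0 G); rewrite leqn0 in leG; rewrite (eqP leG).
have IHL (L : {group gT}) : L \subset G -> #|L| < #|G| -> H \subset L -> H <|<| L.
  move=> sLG ltLG sHL; apply: (IH L p) => //.
  - by rewrite -ltnS (leq_trans ltLG).
  - by move=> r r_pr dv; apply: minp r_pr (dvdn_trans dv (cardSg sLG)).
  - exact: Hyp_sub hyp sLG.
have [eHG|neHG] := eqVneq (gval H) (gval G).
  by rewrite eHG subnormal_refl.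
have prHG : H \proper G by rewrite properEneq neHG sHG.
have [M maxM sHM] := maxgroup_exists (gP := fun M : {group gT} => M \proper G) prHG.
have [prMG maxMG] := maxgroupP maxM.
have sMG := proper_sub prMG.
have nnM : ~~ nilpotent M by apply: contra nnH; exact: nilpotentS sHM.
have pdM : p %| #|M| := dvdn_trans pdH (cardSg sHM).
have [snM|nsnM] := boolP (M <|<| G).
  exact: subnormal_trans (IHL M sMG (proper_card prMG) sHM) snM.
have TIM : TI_subgroup M G.
  case: (hyp M sMG nnM) => // [sn|np]; first by rewrite sn in nsnM.
  by rewrite pdM in np.
have NM : 'N_G(M) = M.
  apply: maxMG; last by rewrite subsetI sMG normG.
  rewrite /= properEneq subsetIl andbT; apply/negP => /eqP EN.
  move: nsnM; rewrite normal_subnormal // /normal sMG.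
  by rewrite -EN subsetIr.
have ntM : M :!=: 1 by apply: contra nnM => /eqP ->; exact: nilpotent1.
have neMG : M != G :> {set gT} by rewrite proper_neq.
have frobM := TI_frob sMG neMG ntM NM TIM.
have [K frobK] := Frobenius_kernel_exists frobM.
have [defG ntK _ _ _] := Frobenius_context frobK.
have [nsKG _ mulKM nKM tiKM] := sdprod_context defG.
have srKM := Frobenius_reg_ker frobK.
have snKX (X : {group gT}) : X \subset M -> p %| #|X| -> (K <*> X)%G <|<| G.
  move=> sXM pdX.
  set L := (K <*> X)%G.
  have sLG : L \subset G by rewrite join_subG normal_sub // (subset_trans sXM sMG).
  have sKL : K \subset L := joing_subl K X.
  have nnL : ~~ nilpotent L.
    apply/negP => nilL.
    have nsKL : K <| L := normalS sKL sLG nsKG.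
    have /trivgPn [k /setIP [Kk Zk] ntk] := meet_center_nil nilL nsKL ntK.
    have ntX : X :!=: 1.
      apply/negP => /eqP X1; move: pdX; rewrite X1 cards1 dvdn1 => /eqP p1.
      by rewrite p1 in p_pr.
    have [x Xx ntx] := trivgPn _ ntX.
    have : k \in 'C_K[x].
      rewrite inE Kk /=; apply/cent1P.
      case/setIP: Zk => _ cLk.
      apply: (centP cLk).
      by rewrite (subsetP (joing_subr K X)).
    by rewrite srKM ?inE ?ntx ?(subsetP sXM) // (negPf ntk).
  have pdL : p %| #|L| := dvdn_trans pdX (cardSg (joing_subr K X)).
  case: (hyp L sLG nnL) => [TI|sn|np].
  - exact: normal_subnormal (TI_normal TI nsKG sKL ntK sLG).
  - exact: sn.
  - by rewrite pdL in np.
have snXM (X : {group gT}) : X \subset M -> p %| #|X| -> X <|<| M.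
  move=> sXM pdX.
  have := setI_subnormal sMG (snKX X sXM pdX).
  suff -> : (K <*> X)%G :&: M = X by [].
  rewrite /= norm_joinEr ?(subset_trans sXM nKM) // setIC -group_modr //.
  by rewrite setIC tiKM mul1g.
have coKM : coprime #|K| #|M| := Frobenius_coprime frobK.
have [eHM|neHM] := eqVneq (gval H) (gval M).
  exfalso; move/negP: nnM; apply.
  apply: (nil_from_sn p_pr pdM).
  - by move=> r r_pr dv; apply: minp r_pr (dvdn_trans dv (cardSg sMG)).
  - exact: snXM.
  move=> x y Mx My cxy ox oy; apply/negPn/negP => yNx.
  move/eqP: ntK; apply.
  exact: fpf_p2 p_pr srKM nKM coKM Mx My cxy ox oy yNx.
set L := (K <*> H)%G.
have sLG : L \subset G by rewrite join_subG normal_sub // (subset_trans sHM sMG).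
have ltLG : #|L| < #|G|.
  have nKH : H \subset 'N(K) := subset_trans sHM nKM.
  have tiKH : K :&: H = 1 by apply/trivgP; rewrite -tiKM setIS.
  rewrite /L /= norm_joinEr // TI_cardMg // -(sdprod_card defG) ltn_pmul2l //.
  by apply: proper_card; rewrite properEneq neHM sHM.
exact: subnormal_trans (IHL L sLG ltLG (joing_subr K H)) (snKX H sHM pdH).
Qed.

Unset Implicit Arguments.

Theorem corollary1p3 (gT : finGroupType) (G : {group gT}) :
  let p := pdiv #|G| in
  (forall H : {group gT}, H \subset G -> ~~ nilpotent H ->
     [\/ TI_subgroup H G, H <|<| G | ~~ (p %| #|H|)%N])
  <->
  (forall H : {group gT}, H \subset G -> ~~ nilpotent H ->
     (p %| #|H|)%N -> H <|<| G).
Proof.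
move=> p; split.
- move=> hyp H sHG nnH pdH.
  have ltG : 1 < #|G|.
    rewrite ltnNge; apply/negP => leG.
    have : #|H| <= 1 by apply: leq_trans (subset_leq_card sHG) leG.
    move/card_le1_trivg => H1; move: nnH; rewrite H1 nilpotent1.
    by [].
  apply: (main_fwd (leqnn #|G|) (pdiv_prime ltG)) => //.
  by move=> r r_pr dv; apply: pdiv_min_dvd (prime_gt1 r_pr) dv.
- move=> hyp H sHG nnH.
  case pd: (p %| #|H|)%N.
    by apply: Or32; apply: hyp.
  by apply: Or33.
Qed.
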